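(* Let $\dot{\succcurlyeq}$ be a preference relation on the set $MS$ of mixed strategies over a propositional language $\mathcal{L}$ that admits an integral representation, and let $\succcurlyeq$ be its restriction to the set $\mathcal{B}$ of bets. Then a subjective model of uncertainty $(\Omega,t,\lambda)$, with either $t$ sound, or $t$ exact and $\lambda$ additive, is an integral representation of $\dot{\succcurlyeq}$ if and only if it is a representation of $\succcurlyeq$.
   Context: Let $\mathbb{P}$ be a set of propositional variables containing distinguished $\mathbf{T}$, $\mathbf{F}$, and $\mathcal{L}$ the language generated by $\neg,\land,\lor$. A strategy is a finitely supported $s:\mathcal{L}\to\mathbb{R}$; $S$ is the set of strategies and $MS$ the set of finitely supported lotteries over $S$ (mixed strategies). A bet is a finitely supported $b:\mathcal{L}\to[0,1]$ summing to $1$, viewed as a lottery over the primitive bets $b_\phi$ ($b_\phi$ being the strategy with $b_\phi(\phi)=1$ and $0$ elsewhere), so $\mathcal{B}\subseteq MS$. A truth valuation on $\Omega$ is $t:\mathcal{L}\to2^\Omega$ with $t(\mathbf{T})=\Omega,t(\mathbf{F})=\emptyset$; exact: logically equivalent statements have equal images; sound: exact, monotone, symmetric ($t(\neg\phi)=\Omega\setminus t(\phi)$) and $\land$-distributive ($t(\phi\land\psi)=t(\phi)\cap t(\psi)$). A likelihood appraisal on a field $\Sigma$ is $\lambda:\Sigma\to[0,1]$, $\lambda(\emptyset)=0,\lambda(\Omega)=1$; additive if finitely additive. $(\Omega,t,\lambda)$ represents $\succcurlyeq$ if $b\succcurlyeq b'\iff\sum_\phi b(\phi)\lambda(t(\phi))\ge\sum_\phi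 b'(\phi)\lambda(t(\phi))$. Integral: $\int x\,\mathrm{d}\lambda=\int_{-\infty}^\infty\lambda(\{x\ge r\})\mathrm{d}r$. For sound $t$, $t_\circ(s)=\sum_\phi s(\phi)\mathbf{1}_{t(\phi)}$. For exact $t'$ with additive $\lambda'$ such that $(\Omega',t',\lambda')$ represents $\succcurlyeq$, and any sound representation $(\Omega_0,t_0,\lambda_0)$ of $\succcurlyeq$: if $x=(t_0)_\circ(s)$ has image $\{\alpha_1>\dots>\alpha_n\}$, $\alpha_{n+1}=0$, and $t_0(\phi_k)=x^{-1}(\{\alpha_1,\dots,\alpha_k\})$, set $t'_\bullet(s)=[\sum_k(\alpha_k-\alpha_{k+1})\mathbf{1}_{t'(\phi_k)}]$ ($\lambda'$-a.e. class, independent of the choices). $\dot{\succcurlyeq}$ admits an integral representation $(\Omega,t,\lambda)$ if $\dot{\succcurlyeq}$ is linear in mixtures (represented by an expected-utility functional over lotteries) and for all pure strategies $s,s'\in S$: $s\,\dot{\succcurlyeq}\,s'$ iff $\int t_\circ(s)\mathrm{d}\lambda\ge\int t_\circ(s')\mathrm{d}\lambda$ (for sound $t$), respectively iff $\int t_\bullet(s)\mathrm{d}\lambda\ge\int t_\bullet(s')\mathrm{d}\lambda$ (for exact $t$ and additive $\lambda$). *)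

(* Defs.v *)
From HB Require Import structures.
From mathcomp Require Import all_boot all_order all_algebra.
From mathcomp Require Import finmap.
From mathcomp Require Import boolp classical_sets functions cardinality reals.

Set Implicit Arguments.
Unset Strict Implicit.
Unset Printing Implicit Defensive.

Import Order.TTheory GRing.Theory Num.Theory.
Local Open Scope ring_scope.
Local Open Scope classical_set_scope.

Inductive lform (V : Type) : Type :=
  | Var of V
  | Neg of lform V
  | And of lform V & lform V
  | Or  of lform V & lform V.

Arguments Var {V}.
Arguments Neg {V}.
Arguments And {V}.
Arguments Or {V}.

Section FormChoice.
Variable V : choiceType.

Fixpoint form_enc (f : lform V) : GenTree.tree V :=
  match f with
  | Var x => GenTree.Leaf x
  | Neg g => GenTree.Node 0 [:: form_enc g]
  | And g h => GenTree.Node 1 [:: form_enc g; form_enc h]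
  | Or g h => GenTree.Node 2 [:: form_enc g; form_enc h]
  end.

Fixpoint form_dec (t : GenTree.tree V) : option (lform V) :=
  match t with
  | GenTree.Leaf x => Some (Var x)
  | GenTree.Node 0 [:: a] =>
      if form_dec a is Some g then Some (Neg g) else None
  | GenTree.Node 1 [:: a; b] =>
      match form_dec a, form_dec b with
      | Some g, Some h => Some (And g h) | _, _ => None end
  | GenTree.Node 2 [:: a; b] =>
      match form_dec a, form_dec b with
      | Some g, Some h => Some (Or g h) | _, _ => None end
  | _ => None
  end.

Lemma form_encK : pcancel form_enc form_dec.
Proof. by elim=> [x|g IH|g IHg h IHh|g IHg h IHh] //=; rewrite ?IH ?IHg ?IHh. Qed.

HB.instance Definition _ := Equality.copy (lform V) (pcan_type form_encK).
HB.instance Definition _ := Choice.copy (lform V) (pcan_type form_encK).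
End FormChoice.

Section Semantics.
Variables (V : Type) (T F : V).

Fixpoint eval (v : V -> bool) (f : lform V) : bool :=
  match f with
  | Var x => v x
  | Neg g => ~~ eval v g
  | And g h => eval v g && eval v h
  | Or g h => eval v g || eval v h
  end.

Definition admissible (v : V -> bool) := v T = true /\ v F = false.

Definition lequiv (f g : lform V) :=
  forall v, admissible v -> eval v f = eval v g.
Definition entails (f g : lform V) :=
  forall v, admissible v -> eval v f -> eval v g.

Definition truth_valuation (Om : Type) (t : lform V -> set Om) :=
  t (Var T) = setT /\ t (Var F) = set0.

Definition exact (Om : Type) (t : lform V -> set Om) :=
  forall f g, lequiv f g -> t f = t g.

Definition monotone (Om : Type) (t : lform V -> set Om) :=
  forall f g, entails f g -> t f `<=` t g.

Definition symmetric (Om : Type) (t : lform V -> set Om) :=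
  forall f, t (Neg f) = ~` t f.

Definition and_distributive (Om : Type) (t : lform V -> set Om) :=
  forall f g, t (And f g) = t f `&` t g.

Definition sound (Om : Type) (t : lform V -> set Om) :=
  [/\ exact t, monotone t, symmetric t & and_distributive t].
End Semantics.

Definition set_field (Om : Type) (Sig : set (set Om)) :=
  [/\ Sig setT,
      (forall A, Sig A -> Sig (~` A)) &
      (forall A B, Sig A -> Sig B -> Sig (A `|` B))].

Definition likelihood (R : realType) (Om : Type) (Sig : set (set Om))
    (lam : set Om -> R) :=
  [/\ lam set0 = 0, lam setT = 1 &
      forall A, Sig A -> 0 <= lam A <= 1].

Definition additive (R : realType) (Om : Type) (Sig : set (set Om))
    (lam : set Om -> R) :=
  forall A B, Sig A -> Sig B -> A `&` B = set0 -> lam (A `|` B) = lam A + lam B.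

Definition model (R : realType) (V : Type) (T F : V) (Om : Type)
    (t : lform V -> set Om) (Sig : set (set Om)) (lam : set Om -> R) :=
  [/\ truth_valuation T F t, set_field Sig, (forall f, Sig (t f)) &
      likelihood Sig lam].

Definition strategy (R : realType) (V : choiceType) :=
  {fsfun lform V -> R with 0}.

(* finitely supported real functions on strategies; the mixed strategies
   are those among them that are lotteries *)
Definition mixed (R : realType) (V : choiceType) :=
  {fsfun strategy R V -> R with 0}.

Definition lottery (R : realType) (V : choiceType) (p : mixed R V) :=
  (forall s, 0 <= p s) /\ \sum_(s <- finsupp p) p s = 1.

Definition bet (R : realType) (V : choiceType) (b : strategy R V) :=
  (forall f, 0 <= b f <= 1) /\ \sum_(f <- finsupp b) b f = 1.

Definition prim (R : realType) (V : choiceType) (phi : lform V) : strategy R V :=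
  [fsfun x in [fset phi]%fset => 1 | 0].

(* a bet viewed as a lottery over the primitive bets *)
Definition lot_of_bet (R : realType) (V : choiceType) (b : strategy R V)
    : mixed R V :=
  [fsfun s in [fset prim R phi | phi in finsupp b]%fset =>
     \sum_(phi <- finsupp b) b phi * (s == prim R phi)%:R | 0].

Definition bet_pref (R : realType) (V : choiceType)
    (pref : mixed R V -> mixed R V -> Prop) (b b' : strategy R V) :=
  pref (lot_of_bet b) (lot_of_bet b').

Definition preference (R : realType) (V : choiceType)
    (pref : mixed R V -> mixed R V -> Prop) :=
  (forall p q, lottery p -> lottery q -> pref p q \/ pref q p) /\
  (forall p q r, lottery p -> lottery q -> lottery r ->
     pref p q -> pref q r -> pref p r).

Definition represents (R : realType) (V : choiceType)
    (pref : mixed R V -> mixed R V -> Prop)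
    (Om : Type) (t : lform V -> set Om) (lam : set Om -> R) :=
  forall b b', bet b -> bet b' ->
    (bet_pref pref b b' <->
     \sum_(f <- finsupp b') b' f * lam (t f)
       <= \sum_(f <- finsupp b) b f * lam (t f)).

(* the values of x, sorted strictly decreasingly: alpha_1 > ... > alpha_n *)
Definition levels (R : realType) (Om : Type) (x : Om -> R) : seq R :=
  sort (fun a b => b <= a) (fset_set (range x)).

(* Choquet integral of a simple (finitely valued) function:
   sum_k (alpha_k - alpha_(k+1)) lam {x >= alpha_k}, alpha_(n+1) = 0,
   i.e. int_0^oo lam{x>=r} dr + int_-oo^0 (lam{x>=r} - 1) dr. *)
Definition choquet (R : realType) (Om : Type) (lam : set Om -> R)
    (x : Om -> R) : R :=
  let a := levels x in
  \sum_(k < size a)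
     (nth 0 a k - nth 0 a k.+1) * lam [set w | nth 0 a k <= x w].

Definition indic (R : realType) (Om : Type) (A : set Om) (w : Om) : R :=
  if `[< A w >] then 1 else 0.
Arguments indic {R Om}.

Definition tcirc (R : realType) (V : choiceType) (Om : Type)
    (t : lform V -> set Om) (s : strategy R V) : Om -> R :=
  fun w => \sum_(f <- finsupp s) s f * indic (t f) w.

(* For a sound t0 and strategy s, with x = t0_circ(s) and levels
   alpha_1 > ... > alpha_n (indexed from 0 here):  phi is a valid choice
   of the phi_k, i.e. t0(phi_k) = x^-1{alpha_1, ..., alpha_k}. *)
Definition bullet_choice (R : realType) (V : choiceType) (Om0 : Type)
    (t0 : lform V -> set Om0) (s : strategy R V) (phi : nat -> lform V) :=
  let x := tcirc t0 s in
  let a := levels x in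
  forall k, (k < size a)%N ->
    t0 (phi k) = [set w | exists2 j, (j <= k)%N & x w = nth 0 a j].

(* a representative of t_bullet(s) = [sum_k (alpha_k - alpha_(k+1)) 1_{t(phi_k)}] *)
Definition tbullet (R : realType) (V : choiceType) (Om0 Om : Type)
    (t0 : lform V -> set Om0) (t : lform V -> set Om) (s : strategy R V)
    (phi : nat -> lform V) : Om -> R :=
  let a := levels (tcirc t0 s) in
  fun w => \sum_(k < size a) (nth 0 a k - nth 0 a k.+1) * indic (t (phi k)) w.

Definition EU (R : realType) (V : choiceType) (u : strategy R V -> R)
    (p : mixed R V) : R :=
  \sum_(s <- finsupp p) p s * u s.

Definition sound_rep (R : realType) (V : choiceType) (T F : V)
    (pref : mixed R V -> mixed R V -> Prop)
    (Om0 : Type) (t0 : lform V -> set Om0) (Sig0 : set (set Om0))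
    (lam0 : set Om0 -> R) :=
  [/\ model T F t0 Sig0 lam0, sound T F t0 & represents pref t0 lam0].

Definition int_rep_sound (R : realType) (V : choiceType) (T F : V)
    (pref : mixed R V -> mixed R V -> Prop)
    (Om : Type) (t : lform V -> set Om) (Sig : set (set Om))
    (lam : set Om -> R) :=
  [/\ model T F t Sig lam, sound T F t &
      forall p q, lottery p -> lottery q ->
        (pref p q <->
         EU (fun s => choquet lam (tcirc t s)) q
           <= EU (fun s => choquet lam (tcirc t s)) p)].

(* Integral representation, exact/additive case.  t_bullet is only defined
   when (Om, t, lam) represents the restriction to bets and a sound
   representation of it exists; the comparison is required for every
   sound representation and every admissible choice of the phi_k. *)
Definition int_rep_exact (R : realType) (V : choiceType) (T F : V)
    (pref : mixed R V -> mixed R V -> Prop)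
    (Om : Type) (t : lform V -> set Om) (Sig : set (set Om))
    (lam : set Om -> R) :=
  [/\ model T F t Sig lam, exact T F t, additive Sig lam,
      represents pref t lam &
      exists (Om0 : Type) (t0 : lform V -> set Om0) (Sig0 : set (set Om0))
              (lam0 : set Om0 -> R), sound_rep T F pref t0 Sig0 lam0] /\
      forall (Om0 : Type) (t0 : lform V -> set Om0) (Sig0 : set (set Om0))
             (lam0 : set Om0 -> R) (phi : strategy R V -> nat -> lform V),
        sound_rep T F pref t0 Sig0 lam0 ->
        (forall s, bullet_choice t0 s (phi s)) ->
        forall p q, lottery p -> lottery q ->
          (pref p q <->
           EU (fun s => choquet lam (tbullet t0 t s (phi s))) q
             <= EU (fun s => choquet lam (tbullet t0 t s (phi s))) p).

Definition admits_int_rep (R : realType) (V : choiceType) (T F : V)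
    (pref : mixed R V -> mixed R V -> Prop) :=
  exists (Om : Type) (t : lform V -> set Om) (Sig : set (set Om))
         (lam : set Om -> R),
    int_rep_sound T F pref t Sig lam \/ int_rep_exact T F pref t Sig lam.

(* Main.v *)
Require Import Defs.
From HB Require Import structures.
From mathcomp Require Import all_boot all_order all_algebra.
From mathcomp Require Import finmap.
From mathcomp Require Import boolp classical_sets functions cardinality reals.
From mathcomp Require Import ring lra.

Module Aux.
Set Implicit Arguments.
Unset Strict Implicit.
Unset Printing Implicit Defensive.
Import Order.TTheory GRing.Theory Num.Theory.
Local Open Scope ring_scope.
Local Open Scope classical_set_scope.
Section Gen.
Variable R : realType.

Fixpoint Frec (g : R -> R) (l : seq R) : R :=
  match l with [::] => 0 | a :: l' => (a - head 0 l') * g a + Frec g l' end.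

Lemma Frec_nth g l :
  \sum_(k < size l) (nth 0 l k - nth 0 l k.+1) * g (nth 0 l k) = Frec g l.
Proof.
elim: l => [|a l IH] /=; first by rewrite big_ord0.
rewrite big_ord_recl /= -IH; congr (_ + _); by case: l {IH}.
Qed.

Definition gtr (a b : R) := b < a.
Lemma gtr_trans : transitive gtr.
Proof. by move=> a b c h1 h2; rewrite /gtr (lt_trans h2 h1). Qed.

Lemma abel_aux (Om : Type) (lam : set Om -> R) (x : Om -> R) (l : seq R) a :
  sorted gtr (a :: l) -> (forall w, x w \in a :: l \/ a < x w) ->
  Frec (fun r => lam [set w | r <= x w]) (a :: l) =
  a * lam [set w | a <= x w] +
  \sum_(v <- l) v * (lam [set w | v <= x w] - lam [set w | v < x w]).
Proof.
elim: l a => [|b l IH] a; first by move=> _ _; rewrite /= big_nil !addr0 subr0.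
move=> srt cov; have /andP[ab pl] : gtr a b && path gtr b l := srt.
rewrite (_ : Frec _ (a :: b :: l) = (a - b) * lam [set w | a <= x w] +
   Frec (fun r => lam [set w | r <= x w]) (b :: l)) //.
rewrite IH //; last first.
  move=> w; case: (cov w); last by move=> h; right; apply: lt_trans h.
  rewrite inE => /orP[/eqP->|]; [by right|by left].
rewrite big_cons.
have -> : [set w | b < x w] = [set w | a <= x w].
  apply/seteqP; split => w /=.
  - move=> bx; case: (cov w) => [|/ltW//].
    rewrite !inE => /orP[/eqP->//|/orP[/eqP E|xl]]; first by move: bx; rewrite E ltxx.
    have := (pl : path gtr b l); rewrite (path_sortedE gtr_trans) => /andP[/allP /(_ _ xl)].
    by rewrite /gtr => /lt_trans /(_ bx); rewrite ltxx.
  - by move=> ax; exact: lt_le_trans ab ax.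
set s := \sum_(_ <- _) _; set p := lam [set w | a <= x w]; set q := lam [set w | b <= x w].
clearbody s p q. ring.
Qed.

Lemma abel (Om : Type) (lam : set Om -> R) (x : Om -> R) (l : seq R) :
  lam set0 = 0 -> sorted gtr l -> (forall w, x w \in l) ->
  Frec (fun r => lam [set w | r <= x w]) l =
  \sum_(v <- l) v * (lam [set w | v <= x w] - lam [set w | v < x w]).
Proof.
case: l => [|a l] l0 srt cov; first by rewrite big_nil.
rewrite abel_aux //; last by move=> w; left.
rewrite big_cons.
have -> : [set w | a < x w] = set0.
  apply/seteqP; split => w //= ax.
  have := cov w; rewrite inE => /orP[/eqP E|xl]; first by move: ax; rewrite E ltxx.
  have := srt; rewrite /= (path_sortedE gtr_trans) => /andP[/allP /(_ _ xl)].
  by rewrite /gtr => /lt_trans /(_ ax); rewrite ltxx.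
by rewrite l0 subr0.
Qed.

Lemma sum_indep (f : R -> R) (P : pred R) (S S' : seq R) :
  uniq S -> uniq S' -> (forall v, ~~ P v -> f v = 0) ->
  (forall v, P v -> v \in S) -> (forall v, P v -> v \in S') ->
  \sum_(v <- S) f v = \sum_(v <- S') f v.
Proof.
move=> uS uS' f0 PS PS'.
rewrite (bigID P) /= [X in _ + X]big1 ?addr0; last by move=> v /f0.
rewrite [RHS](bigID P) /= [X in _ + X]big1 ?addr0; last by move=> v /f0.
rewrite -(big_filter S) -(big_filter S'); apply: perm_big; apply: uniq_perm; rewrite ?filter_uniq // => v.
by rewrite !mem_filter; case Pv: (P v) => //=; rewrite ?PS ?PS'.
Qed.

End Gen.
Section Lev.
Variable R : realType.

Definition inrange (Om : Type) (x : Om -> R) : pred R := fun v => `[< exists w, x w = v >].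

Lemma levels_props (Om : Type) (x : Om -> R) (S : seq R) : (forall w, x w \in S) ->
  [/\ uniq (levels x), sorted (@gtr R) (levels x) &
      forall v, (v \in levels x) = inrange x v].
Proof.
move=> cov.
have fin : finite_set (range x).
  apply: (sub_finite_set _ (finite_seq S)) => v [w _ <-] /=; exact: cov.
have U : uniq (levels x) by rewrite /levels sort_uniq fset_uniq.
have M : forall v, (v \in levels x) = inrange x v.
  move=> v; rewrite /levels mem_sort in_fset_set //; apply/idP/asboolP; rewrite in_setE.
  - by move=> [w _ <-]; exists w.
  - by move=> [w <-]; exists w.
split => //.
have S1 : sorted (fun a b : R => b <= a) (levels x).
  by apply: sort_sorted => a b; apply: le_total.
have : sorted <%R (rev (levels x)).
  by rewrite lt_sorted_uniq_le rev_uniq U /= rev_sorted.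
by rewrite rev_sorted.
Qed.

Lemma choquetE (Om : Type) (lam : set Om -> R) (x : Om -> R) (S : seq R) :
  lam set0 = 0 -> uniq S -> (forall w, x w \in S) ->
  choquet lam x = \sum_(v <- S) v * (lam [set w | v <= x w] - lam [set w | v < x w]).
Proof.
move=> l0 uS cov.
have [U srt M] := levels_props cov.
transitivity (Frec (fun r => lam [set w | r <= x w]) (levels x)); first exact: Frec_nth.
rewrite abel //; last by move=> w; rewrite M; apply/asboolP; exists w.
apply: (sum_indep (P := inrange x)) => //.
- move=> v nr; have -> : [set w | v <= x w] = [set w | v < x w]; last by rewrite subrr mulr0.
  apply/seteqP; split => w /=; last exact: ltW.
  rewrite le_eqVlt => /orP[/eqP E|//]; case/asboolPn: nr; by exists w.
- by move=> v; rewrite M.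
- by move=> v /asboolP [w <-].
Qed.

End Lev.
Section Sums.
Variable R : realType.

Fixpoint subsums (l : seq R) : seq R :=
  match l with
  | [::] => [:: 0]
  | c :: l' => subsums l' ++ map (fun u => c + u) (subsums l')
  end.

Lemma subsums_mem (Om I : Type) (r : seq I) (c : I -> R) (A : I -> set Om) w :
  \sum_(i <- r) c i * indic (A i) w \in subsums (map c r).
Proof.
elim: r => [|i r IH]; first by rewrite big_nil /= inE.
rewrite big_cons /= mem_cat /indic; case: asboolP => _.
- by rewrite mulr1 map_f ?orbT.
- by rewrite mulr0 add0r IH.
Qed.

Definition cmp (b : bool) (v u : R) := if b then v < u else v <= u.

Lemma cmp_shift b v c u : cmp b (v - c) u = cmp b v (c + u).
Proof. by case: b; rewrite /cmp ?lerBlDl ?ltrBlDl. Qed.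

Lemma field_I (Om : Type) (Sig : set (set Om)) A B :
  set_field Sig -> Sig A -> Sig B -> Sig (A `&` B).
Proof.
move=> [ST SC SU] SA SB; rewrite -[A `&` B]setCK setCI; apply: (SC); apply: (SU); apply: (SC) => //.
Qed.

Lemma field_pred (Om I : Type) (Sig : set (set Om)) (r : seq I) (c : I -> R)
    (A : I -> set Om) (P : R -> Prop) :
  set_field Sig -> (forall i, Sig (A i)) ->
  Sig [set w | P (\sum_(i <- r) c i * indic (A i) w)].
Proof.
move=> Fd SA; have [ST SC SU] := Fd.
elim: r P => [|i r IH] P.
  have [p0|np0] := pselect (P 0).
  - have -> : [set w | P (\sum_(i <- [::]) c i * indic (A i) w)] = setT.
      by apply/seteqP; split => w //= _; rewrite big_nil.
    exact: ST.
  - have -> : [set w | P (\sum_(i <- [::]) c i * indic (A i) w)] = ~` setT.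
      by rewrite setCT; apply/seteqP; split => w //=; rewrite big_nil.
    exact: SC.
have -> : [set w | P (\sum_(j <- i :: r) c j * indic (A j) w)] =
   (A i `&` [set w | (fun u => P (c i + u)) (\sum_(j <- r) c j * indic (A j) w)]) `|`
   (~` A i `&` [set w | P (\sum_(j <- r) c j * indic (A j) w)]).
  apply/seteqP; split => w /=; rewrite big_cons /indic; case: asboolP => h.
  - by rewrite mulr1 => p; left.
  - by rewrite mulr0 add0r => p; right.
  - by rewrite mulr1 => -[[]//|[]].
  - by rewrite mulr0 add0r => -[[]//|[]].
apply: (SU); apply: field_I => //;
  first [exact: (IH (fun u => P (c i + u))) | exact: IH | apply: (SC); exact: SA].
Qed.

End Sums.

Section Psi.
Variables (R : realType) (V : choiceType) (T F : V).

Fixpoint Psi (b : bool) (r : seq (lform V)) (c : lform V -> R) (v : R) : lform V :=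
  match r with
  | [::] => if cmp b v 0 then Var T else Var F
  | f :: r' => Or (And f (Psi b r' c (v - c f))) (And (Neg f) (Psi b r' c v))
  end.

Lemma sound_Or (Om : Type) (t : lform V -> set Om) :
  sound T F t -> forall a b, t (Or a b) = t a `|` t b.
Proof.
move=> [ex mo sy ad] a b.
rewrite (ex _ (Neg (And (Neg a) (Neg b)))); last by move=> v _ /=; rewrite negb_and !negbK.
by rewrite sy ad !sy setCI !setCK.
Qed.

Lemma Psi_sound (Om : Type) (t : lform V -> set Om) :
  truth_valuation T F t -> sound T F t ->
  forall b r c v, t (Psi b r c v) =
    [set w | cmp b v (\sum_(f <- r) c f * indic (t f) w)].
Proof.
move=> [tT tF] snd; have [ex mo sy ad] := snd.
move=> b; elim => [|f r IH] c v /=.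
  case: ifP => h; [rewrite tT|rewrite tF]; apply/seteqP; split => w //=;
  by rewrite big_nil ?h.
rewrite sound_Or // !ad sy !IH.
apply/seteqP; split => w /=; rewrite big_cons /indic; case: asboolP => h.
- by rewrite mulr1 cmp_shift => -[[]//|[]].
- by rewrite mulr0 add0r => -[[]//|[]].
- by rewrite mulr1 -cmp_shift => p; left.
- by rewrite mulr0 add0r => p; right.
Qed.

End Psi.
Section SoundPart.
Variables (R : realType) (V : choiceType) (T F : V).

Lemma tcirc_cov (Om : Type) (t : lform V -> set Om) (s : strategy R V) w :
  tcirc t s w \in undup (subsums (map s (finsupp s))).
Proof. by rewrite mem_undup; exact: subsums_mem. Qed.

Lemma sound_choquet (Om Om' : Type) (t : lform V -> set Om) (t' : lform V -> set Om')
    (lam : set Om -> R) (lam' : set Om' -> R) (s : strategy R V) :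
  truth_valuation T F t -> sound T F t -> lam set0 = 0 ->
  truth_valuation T F t' -> sound T F t' -> lam' set0 = 0 ->
  (forall f, lam (t f) = lam' (t' f)) ->
  choquet lam (tcirc t s) = choquet lam' (tcirc t' s).
Proof.
move=> tv sd l0 tv' sd' l0' E.
rewrite (choquetE l0 (undup_uniq _) (tcirc_cov t s)).
rewrite (choquetE l0' (undup_uniq _) (tcirc_cov t' s)).
apply: eq_bigr => v _.
have E1 : forall b (Om1 : Type) (t1 : lform V -> set Om1), truth_valuation T F t1 -> sound T F t1 ->
   [set w | cmp b v (tcirc t1 s w)] = t1 (Psi T F b (finsupp s) s v).
  by move=> b Om1 t1 h1 h2; rewrite (Psi_sound h1 h2).
have := E1 false _ _ tv sd; have := E1 true _ _ tv sd.
have := E1 false _ _ tv' sd'; have := E1 true _ _ tv' sd'.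
rewrite /cmp => -> -> -> ->.
by rewrite !E.
Qed.

Lemma levels_set (Om : Type) (x : Om -> R) (S : seq R) k : (forall w, x w \in S) ->
  (k < size (levels x))%N ->
  [set w | nth 0 (levels x) k <= x w] =
  [set w | exists2 j, (j <= k)%N & x w = nth 0 (levels x) j].
Proof.
move=> cov ks; have [U srt M] := levels_props cov.
have hom := sorted_ltn_nth (@gtr_trans R) 0 srt.
apply/seteqP; split => w /=.
- move=> le; have xin : x w \in levels x by rewrite M; apply/asboolP; exists w.
  exists (index (x w) (levels x)); last by rewrite nth_index.
  rewrite leqNgt; apply/negP => kj.
  have := hom k (index (x w) (levels x)); rewrite !inE ks index_mem xin => /(_ isT isT kj).
  by rewrite /gtr nth_index // => /(lt_le_trans) /(_ le); rewrite ltxx.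
- move=> [j jk ->]; move: jk; rewrite leq_eqVlt => /orP[/eqP->//|jk].
  apply: ltW; have := hom j k; rewrite !inE ks (ltn_trans jk ks); exact.
Qed.

Definition bphi (Om : Type) (t : lform V -> set Om) (s : strategy R V) (k : nat) : lform V :=
  Psi T F false (finsupp s) s (nth 0 (levels (tcirc t s)) k).

Lemma bphi_choice (Om : Type) (t : lform V -> set Om) :
  truth_valuation T F t -> sound T F t -> forall s, bullet_choice t s (bphi t s).
Proof.
move=> tv sd s; rewrite /bullet_choice /= => k ks; rewrite /bphi (Psi_sound tv sd).
rewrite -(levels_set (tcirc_cov t s) ks); done.
Qed.

Lemma bullet_val (Om0 : Type) (t0 : lform V -> set Om0) (lam0 : set Om0 -> R) s phi :
  bullet_choice t0 s phi ->
  choquet lam0 (tcirc t0 s) =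
  \sum_(k < size (levels (tcirc t0 s)))
     (nth 0 (levels (tcirc t0 s)) k - nth 0 (levels (tcirc t0 s)) k.+1) * lam0 (t0 (phi k)).
Proof.
move=> bc; rewrite /choquet; apply: eq_bigr => k _.
by rewrite bc // (levels_set (tcirc_cov t0 s)).
Qed.

End SoundPart.
Section AddPart.
Variables (R : realType) (Om : Type) (Sig : set (set Om)) (lam : set Om -> R).
Hypotheses (Fd : set_field Sig) (Ad : Defs.additive Sig lam) (l0 : lam set0 = 0).

Lemma part_sum (y : Om -> R) B (S : seq R) :
  (forall P : R -> Prop, Sig [set w | P (y w)]) -> Sig B -> uniq S ->
  \sum_(u <- S) lam (B `&` [set w | y w = u]) = lam (B `&` [set w | y w \in S]).
Proof.
move=> SigP SB; elim: S => [|u S IH] /=.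
  rewrite big_nil; have -> : B `&` [set w | y w \in [::]] = set0 by apply/seteqP; split => w //= [].
  by rewrite l0.
move=> /andP[uS uU]; rewrite big_cons IH //.
have -> : B `&` [set w | y w \in u :: S] =
   (B `&` [set w | y w = u]) `|` (B `&` [set w | y w \in S]).
  apply/seteqP; split => w /=.
  - by move=> [Bw]; rewrite inE => /orP[/eqP|]; [left|right].
  - by move=> [[Bw ->]|[Bw h]]; split => //; rewrite inE ?eqxx ?h ?orbT.
have S1 : Sig (B `&` [set w | y w = u]) by apply: field_I => //; exact: (SigP (fun z => z = u)).
have S2 : Sig (B `&` [set w | y w \in S]) by apply: field_I => //; exact: (SigP (fun z => z \in S)).
rewrite Ad //.
apply/seteqP; split => w //= [[_ ->] [_ h]]; by move: uS; rewrite h.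
Qed.

Lemma lin_aux (I : Type) (r : seq I) (c : I -> R) (A : I -> set Om) :
  (forall i, Sig (A i)) ->
  forall B (S : seq R), Sig B -> uniq S ->
  (forall w, B w -> \sum_(i <- r) c i * indic (A i) w \in S) ->
  \sum_(v <- S) v * lam (B `&` [set w | \sum_(i <- r) c i * indic (A i) w = v]) =
  \sum_(i <- r) c i * lam (B `&` A i).
Proof.
move=> SA; have [ST SC SU] := Fd.
elim: r => [|i r IH] B S SB uS cov.
  rewrite big_nil big1 // => v _; have [->|nv] := eqVneq v 0; first by rewrite mul0r.
  have -> : B `&` [set w | \sum_(i <- [::]) c i * indic (A i) w = v] = set0.
    by apply/seteqP; split => w //= [_]; rewrite big_nil => E; move: nv; rewrite -E eqxx.
  by rewrite l0 mulr0.
set y := fun w => \sum_(j <- r) c j * indic (A j) w.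
have SigP : forall P : R -> Prop, Sig [set w | P (y w)] by move=> P; exact: (@field_pred R Om I Sig r c A P Fd SA).
have SBA : Sig (B `&` A i) by apply: field_I.
have SBnA : Sig (B `&` ~` A i) by apply: field_I => //; apply: SC.
have E1 : forall v, lam (B `&` [set w | \sum_(j <- i :: r) c j * indic (A j) w = v]) =
   lam ((B `&` A i) `&` [set w | y w = v - c i]) + lam ((B `&` ~` A i) `&` [set w | y w = v]).
  move=> v; rewrite -Ad; first 1 last.
  - by apply: field_I => //; exact: (SigP (fun z => z = v - c i)).
  - by apply: field_I => //; exact: (SigP (fun z => z = v)).
  - by apply/seteqP; split => w //= [[[_ h1] _] [[_ h2] _]].
  congr (lam _); rewrite /y; apply/seteqP; split => w /=; rewrite big_cons /indic; case: asboolP => h.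
  - by rewrite mulr1 => -[Bw <-]; left; split => //; rewrite addrAC subrr add0r.
  - by rewrite mulr0 add0r => -[Bw <-]; right; do !split.
  - rewrite mulr1 => -[[[Bw _] E]|[[_ nA] _]]; last by exfalso; exact: nA h.
    by split => //; rewrite E addrC subrK.
  - rewrite mulr0 add0r => -[[[_ Ah] _]|[[Bw _] E]]; first by exfalso; exact: h Ah.
    by split.
under eq_bigr do rewrite E1 mulrDr.
rewrite big_split /=.
have -> : \sum_(v <- S) v * lam ((B `&` A i) `&` [set w | y w = v - c i]) =
   \sum_(u <- map (fun v => v - c i) S) u * lam ((B `&` A i) `&` [set w | y w = u]) +
   c i * \sum_(u <- map (fun v => v - c i) S) lam ((B `&` A i) `&` [set w | y w = u]).
  by rewrite !big_map big_distrr -big_split; apply: eq_bigr => v _ /=; rewrite -mulrDl subrK.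
have uS' : uniq (map (fun v => v - c i) S) by rewrite map_inj_uniq // => a b /addIr.
rewrite part_sum // (IH (B `&` A i)) //; last first.
  move=> w [Bw Aw]; apply/mapP; exists (c i + y w); last by rewrite addrAC subrr add0r.
  by have := cov w Bw; rewrite big_cons /indic asboolT // mulr1.
rewrite (IH (B `&` ~` A i)) //; last first.
  move=> w [Bw Aw]; have := cov w Bw; by rewrite big_cons /indic asboolF // mulr0 add0r.
have -> : (B `&` A i) `&` [set w | y w \in map (fun v => v - c i) S] = B `&` A i.
  apply/seteqP; split => w /=; first by case.
  move=> [Bw Aw]; split => //; apply/mapP; exists (c i + y w); last by rewrite addrAC subrr add0r.
  by have := cov w Bw; rewrite big_cons /indic asboolT // mulr1.
rewrite big_cons.
have -> : \sum_(j <- r) c j * lam (B `&` A j) =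
   \sum_(j <- r) c j * lam ((B `&` A i) `&` A j) + \sum_(j <- r) c j * lam ((B `&` ~` A i) `&` A j).
  rewrite -big_split; apply: eq_bigr => j _ /=; rewrite -mulrDr -Ad; first 1 last.
  - by apply: field_I => //; exact: SA.
  - by apply: field_I => //; exact: SA.
  - by apply/seteqP; split => w //= [[[_ h1] _] [[_ h2] _]].
  congr (_ * lam _); apply/seteqP; split => w /=.
  - by move=> [Bw Aw]; have [h|h] := pselect (A i w); [left|right].
  - by move=> [[[]]|[[]]].
set a1 := \sum_(_ <- _) _ * lam ((B `&` A i) `&` _).
set a2 := \sum_(_ <- _) _ * lam ((B `&` ~` A i) `&` _).
set a3 := lam (B `&` A i).
rewrite mulrC; clearbody a1 a2 a3; ring.
Qed.

Lemma choquet_add (I : Type) (r : seq I) (c : I -> R) (A : I -> set Om) :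
  (forall i, Sig (A i)) ->
  choquet lam (fun w => \sum_(i <- r) c i * indic (A i) w) = \sum_(i <- r) c i * lam (A i).
Proof.
move=> SA; have [ST SC SU] := Fd.
set x := fun w => _.
have cov : forall w, x w \in undup (subsums (map c r)) by move=> w; rewrite mem_undup subsums_mem.
rewrite (choquetE l0 (undup_uniq _) cov).
have SigP : forall P : R -> Prop, Sig [set w | P (x w)] by move=> P; exact: (@field_pred R Om I Sig r c A P Fd SA).
transitivity (\sum_(v <- undup (subsums (map c r))) v * lam (setT `&` [set w | x w = v])).
  apply: eq_bigr => v _; congr (_ * _); rewrite setTI.
  have -> : [set w | v <= x w] = [set w | v < x w] `|` [set w | x w = v].
    apply/seteqP; split => w /=; first by rewrite le_eqVlt => /orP[/eqP->|]; [right|left].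
    by move=> [/ltW|->].
  rewrite Ad; first by rewrite addrAC subrr add0r.
  - exact: (SigP (fun z => v < z)).
  - exact: (SigP (fun z => z = v)).
  apply/seteqP; split => w //= [h E]; by move: h; rewrite E ltxx.
rewrite (lin_aux SA ST (undup_uniq _)); last by move=> w _; exact: cov.
by apply: eq_bigr => i _; rewrite setTI.
Qed.

End AddPart.
Section Bets.
Variables (R : realType) (V : choiceType) (T F : V).

Lemma sum_supp (K : choiceType) (p : {fsfun K -> R with 0}) (S : {fset K}) (g : K -> R) :
  (finsupp p `<=` S)%fset ->
  \sum_(k <- finsupp p) p k * g k = \sum_(k <- S) p k * g k.
Proof.
move=> sub; apply: big_fset_incl => // k _ kn; by rewrite fsfun_dflt // mul0r.
Qed.

Lemma primE (phi f : lform V) : prim R phi f = (f == phi)%:R.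
Proof. by rewrite /prim fsfun_fun inE; case: eqP. Qed.

Lemma prim_supp (phi : lform V) : (finsupp (prim R phi) `<=` [fset phi])%fset.
Proof.
apply/fsubsetP => f; rewrite mem_finsupp primE inE; move=> H; apply/eqP; move: H; case: (f =P phi) => // _.
by rewrite /= mulr0n eqxx.
Qed.

Lemma prim_inj : injective (prim R (V:=V)).
Proof.
move=> a b E; have := primE a a; rewrite E primE eqxx.
case: (a =P b) => // _ /eqP; by rewrite /= mulr0n eq_sym oner_eq0.
Qed.

Lemma tcirc_prim (Om : Type) (t : lform V -> set Om) (phi : lform V) :
  tcirc t (prim R phi) = indic (t phi).
Proof.
apply: funext => w; rewrite /tcirc (sum_supp _ (prim_supp phi)) big_seq_fset1.
by rewrite primE eqxx mul1r.
Qed.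

Lemma choquet_prim (Om : Type) (t : lform V -> set Om) (lam : set Om -> R) (phi : lform V) :
  lam set0 = 0 -> choquet lam (tcirc t (prim R phi)) = lam (t phi).
Proof.
move=> l0.
have cov : forall w, indic (t phi) w \in [:: (1:R); 0].
  by move=> w; rewrite /indic !inE; case: asboolP; rewrite eqxx ?orbT.
have u : uniq [:: (1:R); 0] by rewrite /= inE oner_eq0.
rewrite tcirc_prim (choquetE l0 u cov).
rewrite big_cons big_cons big_nil mul0r !addr0 mul1r.
have -> : [set w | (1 : R) < indic (t phi) w] = set0.
  by apply/seteqP; split => w //=; rewrite /indic; case: asboolP; rewrite ?ltxx // ltr10.
have -> : [set w | (1 : R) <= indic (t phi) w] = t phi.
  apply/seteqP; split => w /=; rewrite /indic; case: asboolP => //.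
  by rewrite ler10.
by rewrite l0 subr0.
Qed.

Lemma prim_bet (phi : lform V) : bet (prim R phi).
Proof.
split; first by move=> f; rewrite primE; case: eqP => _; rewrite ?ler01 ?lexx.
under eq_bigr do rewrite -[prim R phi _]mulr1.
by rewrite (sum_supp _ (prim_supp phi)) big_seq_fset1 primE eqxx mulr1.
Qed.

Lemma lotE (b : strategy R V) phi0 : phi0 \in finsupp b ->
  lot_of_bet b (prim R phi0) = b phi0.
Proof.
move=> ph; rewrite /lot_of_bet fsfun_fun.
rewrite (_ : prim R phi0 \in _); last by apply/imfsetP; exists phi0.
under eq_bigr do rewrite (inj_eq prim_inj).
rewrite (big_fsetD1 phi0) //= eqxx mulr1 big1_fset ?addr0 // => i.
by rewrite !inE => /andP[ne _] _; rewrite eq_sym (negbTE ne) mulr0.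
Qed.

Lemma lot_supp (b : strategy R V) :
  (finsupp (lot_of_bet b) `<=` [fset prim R phi | phi in finsupp b])%fset.
Proof.
apply/fsubsetP => s; rewrite mem_finsupp /lot_of_bet fsfun_fun.
by case: ifP => //; rewrite eqxx.
Qed.

Lemma EU_lot (u : strategy R V -> R) (b : strategy R V) :
  EU u (lot_of_bet b) = \sum_(phi <- finsupp b) b phi * u (prim R phi).
Proof.
rewrite /EU (sum_supp _ (lot_supp b)) big_imfset /=; last by move=> x y _ _; apply: prim_inj.
apply: eq_big_seq => phi ph; by rewrite lotE.
Qed.

Lemma lot_lottery (b : strategy R V) : bet b -> lottery (lot_of_bet b).
Proof.
move=> [b01 b1]; split.
- move=> s; rewrite /lot_of_bet fsfun_fun; case: ifP => // _.
  by apply: sumr_ge0 => i _; apply: mulr_ge0; [case/andP: (b01 i)|apply: ler0n].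
- have := EU_lot (fun _ => 1) b; rewrite /EU.
  under eq_bigr do rewrite mulr1; move=> ->.
  by under eq_bigr do rewrite mulr1.
Qed.

End Bets.
Section Main.
Variables (R : realType) (V : choiceType) (T F : V).

Lemma model_l0 (Om : Type) t (Sig : set (set Om)) (lam : set Om -> R) :
  model T F t Sig lam -> lam set0 = 0.
Proof. by case=> _ _ _ []. Qed.

Lemma EU_lot_lam (Om : Type) (t : lform V -> set Om) (lam : set Om -> R) (b : strategy R V) :
  lam set0 = 0 ->
  EU (fun s => choquet lam (tcirc t s)) (lot_of_bet b) = \sum_(f <- finsupp b) b f * lam (t f).
Proof. move=> l0; rewrite EU_lot; apply: eq_bigr => f _; by rewrite choquet_prim. Qed.

Lemma isound_rep (pref : mixed R V -> mixed R V -> Prop) (Om : Type) t (Sig : set (set Om)) lam :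
  int_rep_sound T F pref t Sig lam -> represents pref t lam.
Proof.
case=> md sd H b b' hb hb'; have l0 := model_l0 md.
have := H _ _ (lot_lottery hb) (lot_lottery hb'); rewrite !EU_lot_lam //.
Qed.

Definition mixTF (v : R) : strategy R V :=
  [fsfun g in (Var T |` [fset Var F])%fset => if g == Var T then v else 1 - v | 0].

Lemma mix_sum (hTF : T <> F) v (h : lform V -> R) :
  \sum_(g <- finsupp (mixTF v)) mixTF v g * h g = v * h (Var T) + (1 - v) * h (Var F).
Proof.
have sub : (finsupp (mixTF v) `<=` (Var T |` [fset Var F]))%fset.
  apply/fsubsetP => g; rewrite mem_finsupp /mixTF fsfun_fun; case: ifP => //; by rewrite eqxx.
rewrite (sum_supp _ sub) big_fsetU1; last by rewrite inE; apply/eqP => -[].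
rewrite big_seq_fset1 /mixTF !fsfun_fun !inE !eqxx /= orbT.
case: (Var F =P Var T) => [[E]|_] //; exfalso; exact: hTF (esym E).
Qed.

Lemma sum_prim (phi : lform V) (h : lform V -> R) :
  \sum_(g <- finsupp (prim R phi)) prim R phi g * h g = h phi.
Proof. by rewrite (sum_supp _ (prim_supp R phi)) big_seq_fset1 primE eqxx mul1r. Qed.

Lemma mix_bet (hTF : T <> F) v : 0 <= v <= 1 -> bet (mixTF v).
Proof.
move=> /andP[v0 v1]; split.
- move=> g; rewrite /mixTF fsfun_fun; case: ifP => _; last by rewrite lexx ler01.
  case: ifP => _; first by rewrite v0 v1.
  by rewrite subr_ge0 v1 /= lerBlDr lerDl.
- have := mix_sum hTF v (fun _ => 1); rewrite !mulr1 subrKC => <-.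
  by apply: eq_bigr => g _; rewrite mulr1.
Qed.

Lemma rep_unique (hTF : T <> F) (pref : mixed R V -> mixed R V -> Prop)
    (Om : Type) t (Sig : set (set Om)) (lam : set Om -> R)
    (Om' : Type) t' (Sig' : set (set Om')) (lam' : set Om' -> R) :
  model T F t Sig lam -> represents pref t lam ->
  model T F t' Sig' lam' -> represents pref t' lam' ->
  forall f, lam (t f) = lam' (t' f).
Proof.
move=> [[tT tF] _ St [l0 l1 lik]] rep [[tT' tF'] _ St' [l0' l1' lik']] rep' f.
set v := lam (t f).
have v01 : 0 <= v <= 1 by apply: lik.
have mb := mix_bet hTF v01.
have pb := prim_bet R f.
have E1 : \sum_(g <- finsupp (mixTF v)) mixTF v g * lam (t g) = v.
  by rewrite mix_sum // tT tF l0 l1 mulr0 addr0 mulr1.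
have E2 : \sum_(g <- finsupp (mixTF v)) mixTF v g * lam' (t' g) = v.
  by rewrite mix_sum // tT' tF' l0' l1' mulr0 addr0 mulr1.
have h1 := rep (prim R f) (mixTF v) pb mb; have h1' := rep' (prim R f) (mixTF v) pb mb.
have h2 := rep (mixTF v) (prim R f) mb pb; have h2' := rep' (mixTF v) (prim R f) mb pb.
rewrite !sum_prim E1 E2 in h1 h1' h2 h2'.
apply/eqP; rewrite eq_le; apply/andP; split.
- by apply/h1'; apply/h1; rewrite lexx.
- by apply/h2'; apply/h2; rewrite lexx.
Qed.

Lemma soundU (hTF : T <> F) (pref : mixed R V -> mixed R V -> Prop)
    (Om : Type) t (Sig : set (set Om)) (lam : set Om -> R)
    (Om' : Type) t' (Sig' : set (set Om')) (lam' : set Om' -> R) :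
  model T F t Sig lam -> sound T F t -> represents pref t lam ->
  model T F t' Sig' lam' -> sound T F t' -> represents pref t' lam' ->
  forall s, choquet lam (tcirc t s) = choquet lam' (tcirc t' s).
Proof.
move=> md sd rep md' sd' rep' s.
have [tv _ _ _] := md; have [tv' _ _ _] := md'.
exact: (sound_choquet s tv sd (model_l0 md) tv' sd' (model_l0 md') (rep_unique hTF md rep md' rep')).
Qed.

Lemma bulletU (hTF : T <> F) (pref : mixed R V -> mixed R V -> Prop)
    (Om : Type) t (Sig : set (set Om)) (lam : set Om -> R)
    (Om0 : Type) t0 (Sig0 : set (set Om0)) (lam0 : set Om0 -> R) s ph :
  model T F t Sig lam -> Defs.additive Sig lam -> represents pref t lam ->
  sound_rep T F pref t0 Sig0 lam0 -> bullet_choice t0 s ph ->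
  choquet lam (tbullet t0 t s ph) = choquet lam0 (tcirc t0 s).
Proof.
move=> md ad rep [md0 sd0 rep0] bc.
have [tv fd St [l0 _ _]] := md.
rewrite (bullet_val lam0 bc).
set a := levels (tcirc t0 s).
transitivity (\sum_(k <- index_enum 'I_(size a)) (nth 0 a k - nth 0 a k.+1) * lam (t (ph k))).
  exact: (@choquet_add R Om Sig lam fd ad l0 'I_(size a) (index_enum 'I_(size a))
            (fun k => nth 0 a k - nth 0 a k.+1) (fun k => t (ph k)) (fun k => St _)).
apply: eq_bigr => k _; congr (_ * _); exact: (rep_unique hTF md rep md0 rep0).
Qed.

Lemma main_aux (hTF : T <> F) (pref : mixed R V -> mixed R V -> Prop) :
  preference pref ->
  admits_int_rep T F pref ->
  forall (Om : Type) (t : lform V -> set Om) (Sig : set (set Om))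
         (lam : set Om -> R),
    model T F t Sig lam ->
    (sound T F t ->
       (int_rep_sound T F pref t Sig lam <-> represents pref t lam)) /\
    (exact T F t -> Defs.additive Sig lam ->
       (int_rep_exact T F pref t Sig lam <-> represents pref t lam)).
Proof.
move=> _ [Om' [t' [Sig' [lam' adm]]]] Om t Sig lam md; split.
- move=> sd; split; first exact: isound_rep.
  move=> rep; split => // p q lp lq.
  case: adm => H.
  + have rep' := isound_rep H; case: H => md' sd' H'.
    have -> : (fun s => choquet lam (tcirc t s)) = (fun s => choquet lam' (tcirc t' s)).
      by apply: funext => s; exact: (soundU hTF md sd rep md' sd' rep').
    exact: H'.
  + case: H => -[md' ex' ad' rep' _] H'.
    have [tv _ _ _] := md.
    have srep : sound_rep T F pref t Sig lam by [].
    have -> : (fun s => choquet lam (tcirc t s)) =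
              (fun s => choquet lam' (tbullet t t' s (bphi T F t s))).
      apply: funext => s; symmetry.
      exact: (bulletU hTF md' ad' rep' srep (bphi_choice (s:=s) tv sd)).
    exact: (H' _ _ _ _ (fun s => bphi T F t s) srep (fun s => bphi_choice (s:=s) tv sd)).
- move=> ex ad; split; first by case=> -[].
  move=> rep; split.
    split => //; case: adm => H.
    + have rep' := isound_rep H; case: H => md' sd' _.
      by exists Om', t', Sig', lam'.
    + by case: H => -[].
  move=> Om0 t0 Sig0 lam0 ph srep bc p q lp lq.
  have -> : (fun s => choquet lam (tbullet t0 t s (ph s))) = (fun s => choquet lam0 (tcirc t0 s)).
    by apply: funext => s; exact: (bulletU hTF md ad rep srep (bc s)).
  have [md0 sd0 rep0] := srep.
  case: adm => H.
  + have rep' := isound_rep H; case: H => md' sd' H'.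
    have -> : (fun s => choquet lam0 (tcirc t0 s)) = (fun s => choquet lam' (tcirc t' s)).
      by apply: funext => s; exact: (soundU hTF md0 sd0 rep0 md' sd' rep').
    exact: H'.
  + case: H => -[md' ex' ad' rep' _] H'.
    have -> : (fun s => choquet lam0 (tcirc t0 s)) =
              (fun s => choquet lam' (tbullet t0 t' s (ph s))).
      apply: funext => s; symmetry.
      exact: (bulletU hTF md' ad' rep' srep (bc s)).
    exact: (H' _ _ _ _ ph srep bc).
Qed.

End Main.
End Aux.

Theorem corollary1 (R : realType) (V : choiceType) (T F : V) (hTF : T <> F)
    (pref : mixed R V -> mixed R V -> Prop) :
  preference pref ->
  admits_int_rep T F pref ->
  forall (Om : Type) (t : lform V -> set Om) (Sig : set (set Om))
         (lam : set Om -> R),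
    model T F t Sig lam ->
    (sound T F t ->
       (int_rep_sound T F pref t Sig lam <-> represents pref t lam)) /\
    (exact T F t -> additive Sig lam ->
       (int_rep_exact T F pref t Sig lam <-> represents pref t lam)).
Proof. exact: Aux.main_aux. Qed.
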